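(* Let $f : X \to \mathbb{R}$ be arbitrary, and suppose there exist $r \in \mathbb{R}$ and a Cantor set $C \subseteq X$ such that, in the subspace topology of $C$, the set $C \cap \{f \ge r\}$ is meagre and dense in $C$. Then Player I has a winning strategy in $\Gamma(f)$.
   Context: Let $A$ be a non-empty countable set and $T$ a pruned tree on $A$ (a set of finite sequences of elements of $A$, closed under initial segments, in which every sequence has a proper extension in $T$). Let $X$ be the set of infinite branches of $T$, with the topology generated by the cylinder sets $O(s) = \{x \in X : s \text{ is an initial segment of } x\}$, $s \in T$. A Cantor set is a subset homeomorphic to the middle-thirds Cantor set. $\{f \ge r\} = \{x \in X : f(x) \ge r\}$. The game $\Gamma(f)$: Player I and Player II alternate, Player I moving first; Player I plays $x_0, x_1, \dots \in A$ subject to $(x_0,\dots,x_t) \in T$ for all $t$, and after each move $x_t$ Player II plays a real number $v_t$. Player II wins the run iff $f(x_0,x_1,\dots) = \limsup_{t\to\infty} v_t$; otherwise Player I wins. *)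

(* Defs.v *)
From Stdlib Require Import Reals List.
From Coquelicot Require Import Coquelicot.
Import ListNotations.
Open Scope R_scope.

Definition is_tree {A : Type} (T : list A -> Prop) : Prop :=
  forall s t : list A, T (s ++ t) -> T s.

Definition is_pruned_tree {A : Type} (T : list A -> Prop) : Prop :=
  is_tree T /\ forall s, T s -> exists t, t <> nil /\ T (s ++ t).

Definition prefix_of {A : Type} (x : nat -> A) (n : nat) : list A :=
  map x (seq 0 n).

Definition is_branch {A : Type} (T : list A -> Prop) (x : nat -> A) : Prop :=
  forall n, T (prefix_of x n).

Definition branches {A : Type} (T : list A -> Prop) : Type :=
  { x : nat -> A | is_branch T x }.

Definition cyl {A : Type} {T : list A -> Prop} (s : list A) (x : branches T) : Prop :=
  prefix_of (proj1_sig x) (length s) = s.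

(* open sets of the topology generated by the cylinders O(s), s in T
   (they form a base, so open = union of cylinders) *)
Definition openX {A : Type} {T : list A -> Prop} (U : branches T -> Prop) : Prop :=
  forall x, U x -> exists s, T s /\ cyl s x /\ forall y, cyl s y -> U y.

Section Sub.
Context {Y : Type} (op : (Y -> Prop) -> Prop).

Definition rel_open (C V : Y -> Prop) : Prop :=
  exists U, op U /\ forall y, V y <-> (U y /\ C y).

Definition rel_closure (C N : Y -> Prop) (y : Y) : Prop :=
  C y /\ forall V, rel_open C V -> V y -> exists z, V z /\ N z.

Definition rel_interior (C S : Y -> Prop) (y : Y) : Prop :=
  exists V, rel_open C V /\ V y /\ forall z, V z -> S z.

Definition nowhere_dense_in (C N : Y -> Prop) : Prop :=
  (forall y, N y -> C y) /\ forall y, ~ rel_interior C (rel_closure C N) y.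

Definition meagre_in (C M : Y -> Prop) : Prop :=
  (forall y, M y -> C y) /\
  exists Ns : nat -> Y -> Prop,
    (forall n, nowhere_dense_in C (Ns n)) /\ forall y, M y -> exists n, Ns n y.

Definition dense_in (C D : Y -> Prop) : Prop :=
  (forall y, D y -> C y) /\ forall y, C y -> rel_closure C D y.
End Sub.

Definition cont_on {Y Z : Type} (opY : (Y -> Prop) -> Prop) (opZ : (Z -> Prop) -> Prop)
  (C : Y -> Prop) (h : Y -> Z) : Prop :=
  forall V, opZ V -> rel_open opY C (fun y => C y /\ V (h y)).

Definition homeomorphic {Y Z : Type} (opY : (Y -> Prop) -> Prop) (opZ : (Z -> Prop) -> Prop)
  (C : Y -> Prop) (D : Z -> Prop) : Prop :=
  exists (h : Y -> Z) (g : Z -> Y),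
    (forall y, C y -> D (h y) /\ g (h y) = y) /\
    (forall z, D z -> C (g z) /\ h (g z) = z) /\
    cont_on opY opZ C h /\ cont_on opZ opY D g.

(* C_0 = [0,1],  C_{n+1} = C_n/3 ∪ (2/3 + C_n/3) *)
Fixpoint cantor_stage (n : nat) (y : R) : Prop :=
  match n with
  | O => 0 <= y <= 1
  | S m => cantor_stage m (3 * y) \/ cantor_stage m (3 * y - 2)
  end.

Definition middle_thirds (y : R) : Prop := forall n, cantor_stage n y.

Definition is_cantor_set {A : Type} (T : list A -> Prop) (C : branches T -> Prop) : Prop :=
  homeomorphic (@openX A T) (@open R_UniformSpace) C middle_thirds.

(* Player I strategy: (I's previous moves, II's previous moves) -> next x_t *)
(* Player II strategy: (I's moves x_0..x_t, II's previous moves) -> v_t *)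
Fixpoint hist {A : Type} (sigma : list A -> list R -> A) (tau : list A -> list R -> R)
  (n : nat) : list A * list R :=
  match n with
  | O => (nil, nil)
  | S m => let (xs, vs) := hist sigma tau m in
           let a := sigma xs vs in
           (xs ++ [a], vs ++ [tau (xs ++ [a]) vs])
  end.

Definition play_x {A : Type} sigma tau (t : nat) : A :=
  sigma (fst (@hist A sigma tau t)) (snd (hist sigma tau t)).

Definition play_v {A : Type} sigma tau (t : nat) : R :=
  tau (fst (@hist A sigma tau t) ++ [play_x sigma tau t]) (snd (hist sigma tau t)).

Definition winning_I {A : Type} (T : list A -> Prop) (f : branches T -> R)
  (sigma : list A -> list R -> A) : Prop :=
  forall tau : list A -> list R -> R,
    (forall t, T (prefix_of (play_x sigma tau) (S t))) /\
    forall Hx : is_branch T (play_x sigma tau),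
      Finite (f (exist _ (play_x sigma tau) Hx)) <> LimSup_seq (play_v sigma tau).

Definition I_has_winning_strategy {A : Type} (T : list A -> Prop) (f : branches T -> R) : Prop :=
  exists sigma : list A -> list R -> A, winning_I T f sigma.

(* Main.v *)
Require Import Defs.
From Stdlib Require Import Reals List Lia Lra Classical ClassicalEpsilon FunctionalExtensionality ProofIrrelevance.
From Coquelicot Require Import Coquelicot.
Import ListNotations.
Open Scope R_scope.

Lemma prefix_eq_iff {A : Type} (x y : nat -> A) n :
  prefix_of x n = prefix_of y n <-> forall i, (i < n)%nat -> x i = y i.
Proof.
  unfold prefix_of. induction n as [|n IH].
  - split; [intros _ i Hi; lia | reflexivity].
  - rewrite seq_S, !map_app. simpl. split.
    + intros H. apply app_inj_tail in H as [H1 H2].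
      intros i Hi. destruct (Nat.eq_dec i n) as [->|Hne]; [exact H2|].
      apply (proj1 IH H1). lia.
    + intros H. rewrite (proj2 IH). rewrite (H n) by lia. reflexivity.
      intros i Hi; apply H; lia.
Qed.

Lemma length_prefix {A : Type} (x : nat -> A) n : length (prefix_of x n) = n.
Proof. unfold prefix_of. now rewrite length_map, length_seq. Qed.

Lemma open_ball_R (c e : R) : @open R_UniformSpace (fun z => Rabs (z - c) < e).
Proof.
  intros x Hx.
  assert (Hp : 0 < e - Rabs (x - c)) by lra.
  exists (mkposreal _ Hp). intros y Hy. change (Rabs (y - x) < e - Rabs (x - c)) in Hy.
  replace (y - c) with ((y - x) + (x - c)) by ring.
  eapply Rle_lt_trans; [apply Rabs_triang|]. lra.
Qed.

Lemma stage_open_compl n : forall y, ~ cantor_stage n y ->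
  exists d, 0 < d /\ forall w, Rabs (w - y) < d -> ~ cantor_stage n w.
Proof.
  induction n as [|n IH]; intros y Hy; simpl in *.
  - apply not_and_or in Hy. destruct Hy as [Hy|Hy].
    + exists (- y). split; [lra|]. intros w Hw [H1 H2]. apply Rabs_def2 in Hw. lra.
    + exists (y - 1). split; [lra|]. intros w Hw [H1 H2]. apply Rabs_def2 in Hw. lra.
  - apply not_or_and in Hy as [Ha Hb].
    destruct (IH _ Ha) as [d1 [Hd1 H1]]. destruct (IH _ Hb) as [d2 [Hd2 H2]].
    exists (Rmin d1 d2 / 3). split.
    + apply Rmin_case; lra.
    + intros w Hw [Hw1|Hw1].
      * apply (H1 (3 * w)); auto. apply Rabs_def2 in Hw. pose proof (Rmin_l d1 d2).
        apply Rabs_def1; lra.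
      * apply (H2 (3 * w - 2)); auto. apply Rabs_def2 in Hw. pose proof (Rmin_r d1 d2).
        apply Rabs_def1; lra.
Qed.

Lemma middle_thirds_0 : middle_thirds 0.
Proof.
  intro n. induction n; simpl. lra. left. replace (3 * 0) with 0 by ring. exact IHn.
Qed.

Lemma middle_thirds_closed (z : nat -> R) l :
  (forall n, middle_thirds (z n)) -> Un_cv z l -> middle_thirds l.
Proof.
  intros Hz Hl n. apply NNPP; intro Hn.
  destruct (stage_open_compl n l Hn) as [d [Hd H]].
  destruct (Hl d Hd) as [N HN]. apply (H (z N)).
  apply HN; lia. apply Hz.
Qed.

Section Main.
Context (A : Type) (T : list A -> Prop) (f : branches T -> R) (r : R)
  (C : branches T -> Prop) (h : branches T -> R) (g : R -> branches T)
  (Hhg : forall y, C y -> middle_thirds (h y) /\ g (h y) = y)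
  (Hgh : forall z, middle_thirds z -> C (g z) /\ h (g z) = z)
  (Hh : cont_on (@openX A T) (@open R_UniformSpace) C h)
  (Hg : cont_on (@open R_UniformSpace) (@openX A T) middle_thirds g)
  (Ns : nat -> branches T -> Prop)
  (HNs : forall n, nowhere_dense_in (@openX A T) C (Ns n))
  (Hcov : forall y, C y /\ f y >= r -> exists n, Ns n y)
  (Hdense : dense_in (@openX A T) C (fun x => C x /\ f x >= r)).

Local Notation X := (branches T).

Definition agree (a b : X) n := forall i, (i < n)%nat -> proj1_sig a i = proj1_sig b i.
Definition eps (k : nat) := / INR (S k).
Definition good k (d : X) m :=
  forall y, C y -> agree y d m -> ~ Ns k y /\ Rabs (h y - h d) < eps k.
Definition Dset (x : X) := C x /\ f x >= r.

Lemma eps_pos k : 0 < eps k.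
Proof. unfold eps. apply Rinv_0_lt_compat. apply lt_0_INR. lia. Qed.

Lemma eps_anti k k' : (k <= k')%nat -> eps k' <= eps k.
Proof.
  intro H. unfold eps. apply Rinv_le_contravar. apply lt_0_INR; lia. apply le_INR; lia.
Qed.

Lemma eps_small e : 0 < e -> exists k, eps k < e.
Proof.
  intro He. destruct (archimed_cor1 e He) as [N [H1 H2]].
  exists (N - 1)%nat. unfold eps. replace (S (N - 1)) with N by lia. exact H1.
Qed.

Lemma agree_open (x : X) n : @openX A T (fun y => agree y x n).
Proof.
  intros y Hy. exists (prefix_of (proj1_sig y) n). split; [apply (proj2_sig y)|]. split.
  - unfold cyl. now rewrite length_prefix.
  - intros y' Hy'. unfold cyl in Hy'. rewrite length_prefix in Hy'.
    intros i Hi. rewrite <- (Hy i Hi). apply (proj1 (prefix_eq_iff _ _ n) Hy' i Hi).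
Qed.

Lemma agree_cyl (s : list A) (y z : X) : cyl s y -> agree z y (length s) -> cyl s z.
Proof.
  unfold cyl. intros Hy Hz. rewrite <- Hy at 2. apply prefix_eq_iff. exact Hz.
Qed.

Lemma agree_le (a b : X) n m : (n <= m)%nat -> agree a b m -> agree a b n.
Proof. intros H Hab i Hi. apply Hab. lia. Qed.

Lemma agree_trans (a b c : X) n : agree a b n -> agree b c n -> agree a c n.
Proof. intros H1 H2 i Hi. rewrite H1 by exact Hi. apply H2, Hi. Qed.

Lemma agree_sym (a b : X) n : agree a b n -> agree b a n.
Proof. intros H i Hi. symmetry. apply H, Hi. Qed.

Lemma choose_ex k (d0 : X) n : C d0 ->
  exists p : X * nat, Dset (fst p) /\ agree (fst p) d0 n /\ good k (fst p) (snd p).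
Proof.
  intro Hd0.
  assert (Hy : exists y, C y /\ agree y d0 n /\ ~ rel_closure (@openX A T) C (Ns k) y).
  { apply NNPP. intro Hno. destruct (HNs k) as [_ Hnd]. apply (Hnd d0).
    exists (fun y => C y /\ agree y d0 n). split; [|split].
    - exists (fun y => agree y d0 n). split; [apply agree_open|]. intro y; tauto.
    - split; [exact Hd0|]. intros i Hi; reflexivity.
    - intros z [Hz1 Hz2]. apply NNPP. intro Hz3. apply Hno. exists z. auto. }
  destruct Hy as [y [Hy1 [Hy2 Hy3]]].
  assert (HV : exists V, rel_open (@openX A T) C V /\ V y /\ forall z, V z -> ~ Ns k z).
  { apply NNPP. intro Hno. apply Hy3. split; [exact Hy1|]. intros V HV HVy.
    apply NNPP. intro Hno2. apply Hno. exists V. split; [exact HV|]. split; [exact HVy|].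
    intros z Hz Hn. apply Hno2. exists z. auto. }
  destruct HV as [V [[U [HU HUV]] [HVy HVN]]].
  destruct (HU y (proj1 (proj1 (HUV y) HVy))) as [s [Hs1 [Hs2 Hs3]]].
  destruct (Hh _ (open_ball_R (h y) (eps k / 2))) as [U2 [HU2 HU2e]].
  assert (HU2y : U2 y).
  { apply (HU2e y). split; [exact Hy1|]. replace (h y - h y) with 0 by ring.
    rewrite Rabs_R0. pose proof (eps_pos k). lra. }
  destruct (HU2 y HU2y) as [s2 [Hs21 [Hs22 Hs23]]].
  set (m := Nat.max n (Nat.max (length s) (length s2))).
  destruct (proj2 Hdense y Hy1) as [_ Hcl].
  destruct (Hcl (fun z => agree z y m /\ C z)) as [d [[Hd1 Hd2] Hd3]].
  { exists (fun z => agree z y m). split; [apply agree_open|]. intro; tauto. }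
  { split; [intros i Hi; reflexivity|exact Hy1]. }
  exists (d, m). simpl. split; [exact Hd3|]. split.
  { apply agree_trans with y. apply agree_le with m. unfold m; lia. exact Hd1. exact Hy2. }
  intros y' Hy'1 Hy'2.
  assert (Hy'y : agree y' y m) by (eapply agree_trans; eauto).
  split.
  - apply HVN. apply (HUV y'). split; [|exact Hy'1]. apply Hs3.
    apply agree_cyl with y; auto. apply agree_le with m; [unfold m; lia|exact Hy'y].
  - assert (E1 : C y' /\ Rabs (h y' - h y) < eps k / 2).
    { apply HU2e. split; [|exact Hy'1]. apply Hs23. apply agree_cyl with y; auto.
      apply agree_le with m; [unfold m; lia|exact Hy'y]. }
    assert (E2 : C d /\ Rabs (h d - h y) < eps k / 2).
    { apply HU2e. split; [|exact Hd2]. apply Hs23. apply agree_cyl with y; auto.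
      apply agree_le with m; [unfold m; lia|exact Hd1]. }
    destruct E1 as [_ E1]. destruct E2 as [_ E2].
    apply Rabs_def2 in E1. apply Rabs_def2 in E2. apply Rabs_def1; lra.
Qed.

Definition choose k (d0 : X) n : X * nat :=
  epsilon (inhabits (g 0, 0%nat))
    (fun p => C d0 -> Dset (fst p) /\ agree (fst p) d0 n /\ good k (fst p) (snd p)).

Lemma choose_spec k d0 n : C d0 ->
  Dset (fst (choose k d0 n)) /\ agree (fst (choose k d0 n)) d0 n /\
  good k (fst (choose k d0 n)) (snd (choose k d0 n)).
Proof.
  intro Hd0. unfold choose.
  match goal with |- context [epsilon ?i ?P] =>
    assert (He : exists p, P p) by
      (destruct (choose_ex k d0 n Hd0) as [p Hp]; exists p; intros _; exact Hp);
    exact (epsilon_spec i P He Hd0) end.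
Qed.

Definition state := (nat * (X * nat))%type.

Definition step (st : state) (t : nat) (v : R) : state :=
  if Nat.leb (snd (snd st)) (S t) then
    if Rlt_dec (r - eps (fst st)) v then
      (S (fst st), choose (S (fst st)) (fst (snd st)) (S t))
    else st
  else st.

Definition init : state := (0%nat, choose 0 (g 0) 0).

Fixpoint stt (V : nat -> R) (n : nat) : state :=
  match n with O => init | S n => step (stt V n) n (V n) end.

Definition sigma (xs : list A) (vs : list R) : A :=
  proj1_sig (fst (snd (stt (fun i => nth i vs 0) (length vs)))) (length vs).

Lemma stt_ext V W n : (forall i, (i < n)%nat -> V i = W i) -> stt V n = stt W n.
Proof.
  induction n as [|n IH]; intro H; simpl; [reflexivity|].
  rewrite IH by (intros; apply H; lia). rewrite (H n) by lia. reflexivity.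
Qed.

Section Play.
Variable tau : list A -> list R -> R.
Local Notation Vv := (play_v sigma tau).
Local Notation Xp := (play_x sigma tau).
Local Notation St := (stt (play_v sigma tau)).
Local Notation dd t := (fst (snd (St t))).

Lemma hist_snd t : snd (hist sigma tau t) = map Vv (seq 0 t).
Proof.
  induction t as [|t IH]; [reflexivity|].
  rewrite seq_S, map_app, <- IH. cbn [hist map].
  unfold play_v, play_x. destruct (hist sigma tau t) as [xs vs] eqn:E. simpl. rewrite E. reflexivity.
Qed.

Lemma play_x_eq t : Xp t = proj1_sig (dd t) t.
Proof.
  unfold play_x at 1, sigma. rewrite hist_snd. rewrite length_map, length_seq.
  rewrite (stt_ext _ Vv t). reflexivity.
  intros i Hi. rewrite nth_indep with (d' := Vv 0%nat) by (rewrite length_map, length_seq; lia).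
  rewrite map_nth, seq_nth by lia. reflexivity.
Qed.

Lemma inv t : Dset (dd t) /\ good (fst (St t)) (dd t) (snd (snd (St t))) /\
  forall i, (i < t)%nat -> Xp i = proj1_sig (dd t) i.
Proof.
  induction t as [|t [IH1 [IH2 IH3]]].
  - simpl. destruct (choose_spec 0 (g 0) 0) as [H1 [_ H3]].
    apply (Hgh 0 middle_thirds_0). split; [exact H1|]. split; [exact H3|]. intros; lia.
  - assert (IH4 : forall i, (i < S t)%nat -> Xp i = proj1_sig (dd t) i).
    { intros i Hi. destruct (Nat.eq_dec i t) as [->|Hne]. apply play_x_eq. apply IH3; lia. }
    simpl. unfold step.
    destruct (Nat.leb _ _); [destruct (Rlt_dec _ _)|]; simpl; auto.
    destruct (choose_spec (S (fst (St t))) (dd t) (S t) (proj1 IH1)) as [H1 [H2 H3]].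
    split; [exact H1|]. split; [exact H3|].
    intros i Hi. rewrite IH4 by exact Hi. symmetry. apply H2, Hi.
Qed.

Lemma Xp_le t i : (i <= t)%nat -> Xp i = proj1_sig (dd t) i.
Proof.
  intro H. destruct (Nat.eq_dec i t) as [->|Hne]. apply play_x_eq. apply (inv t). lia.
Qed.

Lemma legal t : T (prefix_of Xp (S t)).
Proof.
  assert (E : prefix_of Xp (S t) = prefix_of (proj1_sig (dd t)) (S t)).
  { apply prefix_eq_iff. intros i Hi. apply Xp_le. lia. }
  rewrite E. apply (proj2_sig (dd t)).
Qed.

Lemma switch t : St (S t) <> St t ->
  (snd (snd (St t)) <= S t)%nat /\ r - eps (fst (St t)) < Vv t /\
  fst (St (S t)) = S (fst (St t)).
Proof.
  simpl. unfold step. destruct (Nat.leb _ _) eqn:E; [destruct (Rlt_dec _ _)|];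
    intro H; try (exfalso; apply H; reflexivity).
  apply Nat.leb_le in E. auto.
Qed.

Lemma stage_mono t t' : (t <= t')%nat -> (fst (St t) <= fst (St t'))%nat.
Proof.
  induction 1; [lia|]. simpl. unfold step.
  destruct (Nat.leb _ _); [destruct (Rlt_dec _ _)|]; simpl; lia.
Qed.

Lemma jlemma t t'' : (t <= t'')%nat -> St t'' <> St t ->
  exists j, (t <= j < t'')%nat /\ St j = St t /\ St (S j) <> St t.
Proof.
  induction t'' as [|t'' IH]; intros Hle Hne.
  - assert (t = 0%nat) by lia. subst. congruence.
  - destruct (Nat.eq_dec t (S t'')) as [E|E]; [subst; congruence|].
    destruct (classic (St t'' = St t)) as [Heq|Heq].
    + exists t''. split; [lia|]. auto.
    + destruct (IH ltac:(lia) Heq) as [j [Hj1 Hj2]]. exists j. split; [lia|exact Hj2].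
Qed.


Lemma sig_eq_X (a b : X) : proj1_sig a = proj1_sig b -> a = b.
Proof.
  destruct a as [a Ha], b as [b Hb]. simpl. intro E. subst. f_equal. apply proof_irrelevance.
Qed.

Lemma win (Hx : is_branch T Xp) : Finite (f (exist _ Xp Hx)) <> LimSup_seq Vv.
Proof.
  intro Hlim. set (x := exist _ Xp Hx : X) in *.
  destruct (ex_LimSup_seq Vv) as [l Hl].
  rewrite (is_LimSup_seq_unique _ _ Hl) in Hlim. rewrite <- Hlim in Hl. simpl in Hl.
  destruct (classic (exists t0, forall t, (t0 <= t)%nat -> St t = St t0)) as [[t0 Ht0]|Hnc].
  - assert (Exd : x = dd t0).
    { apply sig_eq_X. simpl. extensionality i.
      rewrite (Xp_le (Nat.max t0 i) i) by lia. rewrite Ht0 by lia. reflexivity. }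
    assert (Hfx : f x >= r) by (rewrite Exd; apply (inv t0)).
    assert (Hv : forall t, (Nat.max t0 (snd (snd (St t0))) <= t)%nat ->
                 Vv t <= r - eps (fst (St t0))).
    { intros t Ht. apply Rnot_lt_le. intro Hlt.
      pose proof (Ht0 (S t) ltac:(lia)) as Heq.
      change (step (St t) t (Vv t) = St t0) in Heq.
      rewrite (Ht0 t) in Heq by lia. unfold step in Heq.
      rewrite (proj2 (Nat.leb_le _ _)) in Heq by lia.
      destruct (Rlt_dec _ _); [|contradiction].
      apply (f_equal fst) in Heq. simpl in Heq. lia. }
    destruct (Hl (mkposreal _ (eps_pos (fst (St t0))))) as [H1 _].
    destruct (H1 (Nat.max t0 (snd (snd (St t0))))) as [n [Hn1 Hn2]]. simpl in Hn2.
    specialize (Hv n Hn1). lra.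
  - assert (Hnc' : forall t0, exists t, (t0 <= t)%nat /\ St t <> St t0).
    { intro t0. apply NNPP. intro H. apply Hnc. exists t0. intros t Ht.
      apply NNPP. intro H2. apply H. exists t. auto. }
    assert (Hsw : forall t, exists j, (t <= j)%nat /\ St j = St t /\ St (S j) <> St j).
    { intro t. destruct (Hnc' t) as [t'' [H1 H2]].
      destruct (jlemma t t'' H1 H2) as [j [Hj1 [Hj2 Hj3]]].
      exists j. split; [lia|]. split; auto. rewrite Hj2; auto. }
    assert (Hhit : forall k, exists t, fst (St t) = k).
    { induction k as [|k IHk]. exists 0%nat; reflexivity.
      destruct IHk as [t Ht]. destruct (Hsw t) as [j [_ [Hj1 Hj2]]].
      exists (S j). rewrite (proj2 (proj2 (switch j Hj2))). rewrite Hj1, Ht. reflexivity. }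
    assert (F1 : forall k, exists j, fst (St j) = k /\ good k (dd j) (snd (snd (St j))) /\
      (forall i, (i < snd (snd (St j)))%nat -> Xp i = proj1_sig (dd j) i) /\
      (forall t', (S j <= t')%nat -> agree (dd t') (dd j) (snd (snd (St j))))).
    { intro k. destruct (Hhit k) as [t Ht]. destruct (Hsw t) as [j [_ [Hj1 Hj2]]].
      destruct (switch j Hj2) as [Hm _].
      exists j. assert (Hk : fst (St j) = k) by (rewrite Hj1; exact Ht).
      split; [exact Hk|]. split. { rewrite <- Hk. apply (inv j). }
      split. { intros i Hi. apply Xp_le. lia. }
      intros t' Ht' i Hi. rewrite <- (Xp_le t' i) by lia. apply Xp_le. lia. }
    set (z := fun t => h (dd t)).
    assert (Hz : forall t, middle_thirds (z t)) by (intro t; apply Hhg, (inv t)).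
    assert (Hcau : Cauchy_crit z).
    { intros e He. destruct (eps_small (e/2)) as [k Hk]; [lra|].
      destruct (F1 k) as [j [Hj1 [Hj2 [_ Hj4]]]].
      exists (S j). intros n m Hn Hm. unfold Rdist.
      assert (A1 := proj2 (Hj2 (dd n) (proj1 (proj1 (inv n))) (Hj4 n Hn))).
      assert (A2 := proj2 (Hj2 (dd m) (proj1 (proj1 (inv m))) (Hj4 m Hm))).
      unfold z. apply Rabs_def2 in A1. apply Rabs_def2 in A2. apply Rabs_def1; lra. }
    destruct (Rcomplete.R_complete z Hcau) as [l0 Hl2].
    assert (Hml : middle_thirds l0) by exact (middle_thirds_closed z l0 Hz Hl2).
    assert (Exg : x = g l0).
    { apply sig_eq_X. extensionality i. simpl.
      destruct (Hg (fun w => agree w (g l0) (S i)) (agree_open (g l0) (S i))) as [U [HU HUe]].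
      assert (HUl : U l0) by (apply (HUe l0); split; [exact Hml| intros j _; reflexivity]).
      destruct (HU l0 HUl) as [e He].
      destruct (Hl2 e (cond_pos e)) as [N HN].
      set (n := Nat.max N (S i)).
      assert (Hun : U (z n)) by (apply He; exact (HN n ltac:(lia))).
      destruct (proj2 (HUe (z n)) (conj Hun (Hz n))) as [_ Hag].
      unfold z in Hag. rewrite (proj2 (Hhg _ (proj1 (proj1 (inv n))))) in Hag.
      rewrite (Xp_le n i) by lia. apply Hag. lia. }
    assert (HCx : C x) by (rewrite Exg; apply (Hgh l0 Hml)).
    assert (Hfx : f x < r).
    { apply Rnot_ge_lt. intro Hge. destruct (Hcov x (conj HCx Hge)) as [k Hk].
      destruct (F1 k) as [j [_ [Hj2 [Hj3 _]]]].
      apply (proj1 (Hj2 x HCx (fun i Hi => Hj3 i Hi))), Hk. }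
    assert (Hpos : 0 < (r - f x) / 2) by lra.
    destruct (Hl (mkposreal _ Hpos)) as [_ [N HN]]. simpl in HN.
    destruct (eps_small ((r - f x)/2)) as [k Hk]; [lra|].
    destruct (Hhit k) as [tk Htk].
    destruct (Hsw (Nat.max N tk)) as [j [Hj1 [Hj2 Hj3]]].
    destruct (switch j Hj3) as [_ [Hv _]].
    assert (Hst : (k <= fst (St j))%nat).
    { rewrite Hj2, <- Htk. apply stage_mono. lia. }
    pose proof (eps_anti _ _ Hst). specialize (HN j ltac:(lia)). lra.
Qed.

End Play.

Lemma sigma_wins : winning_I T f sigma.
Proof. intro tau. split. apply legal. apply win. Qed.

End Main.

Theorem mainTheorem8 (A : Type)
  (A_countable : exists e : A -> nat, forall a b, e a = e b -> a = b)
  (A_nonempty : inhabited A)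
  (T : list A -> Prop) (HT : is_pruned_tree T)
  (f : branches T -> R) (r : R) (C : branches T -> Prop)
  (HC : is_cantor_set T C)
  (Hmeagre : meagre_in (@openX A T) C (fun x => C x /\ f x >= r))
  (Hdense : dense_in (@openX A T) C (fun x => C x /\ f x >= r)) :
  I_has_winning_strategy T f.
Proof.
  destruct HC as (h & g & Hhg & Hgh & Hh & Hg).
  destruct Hmeagre as [_ [Ns [HNs Hcov]]].
  eexists. eapply sigma_wins; eassumption.
Qed.
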